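(* For integers $0\le j\le n$, $$\sum_{i=j}^n\binom{2n}{2i}B_{2n-2i}{i\brack j}=\begin{cases}0,& j<n,\\ n,& j=n.\end{cases}$$
   Context: $B_n$ is the $n$th Bernoulli number, $\frac{t}{e^t-1}=\sum_{n\ge0}B_n\frac{t^n}{n!}$. The Euler polynomials $E_n(x)$ are defined by $\frac{2e^{xt}}{e^t+1}=\sum_{n\ge0}E_n(x)\frac{t^n}{n!}$. For integers $N\ge0$, the numbers ${N\brack j}$ are defined by $\sum_{j=1}^N{N\brack j}x^{2j-1}=x^{2N}-E_{2N}(x)$ (i.e. they are the negatives of the odd-degree coefficients of $E_{2N}$), with ${N\brack j}=0$ for $j\le0$ or $j>N$. *)

(* Defs.v *)
From mathcomp Require Import all_boot all_order all_algebra.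
Set Implicit Arguments. Unset Strict Implicit. Unset Printing Implicit Defensive.
Import Order.TTheory GRing.Theory Num.Theory.
Local Open Scope ring_scope.

(* Bernoulli numbers B_0..B_n, from the coefficient identity of
   t = (e^t - 1) * sum_n B_n t^n/n!, i.e.
   sum_{k=0}^{n} C(n+1,k) B_k = [n = 0]. *)
Fixpoint bern_seq (n : nat) : seq rat :=
  match n with
  | 0 => [:: 1]
  | m.+1 => let s := bern_seq m in
      rcons s (- (m.+2%:R)^-1 * \sum_(k < m.+1) 'C(m.+2, k)%:R * nth 0 s k)
  end.

Definition bernoulli (n : nat) : rat := nth 0 (bern_seq n) n.

(* Euler polynomials E_0..E_n, from the coefficient identity of
   2 e^{xt} = (e^t + 1) * sum_n E_n(x) t^n/n!, i.e.
   2 x^n = E_n(x) + sum_{k=0}^{n} C(n,k) E_k(x). *)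
Fixpoint euler_seq (n : nat) : seq {poly rat} :=
  match n with
  | 0 => [:: 1]
  | m.+1 => let s := euler_seq m in
      rcons s ('X^(m.+1) - 2^-1 *: \sum_(k < m.+1) 'C(m.+1, k)%:R *: nth 0 s k)
  end.

Definition eulerE (n : nat) : {poly rat} := nth 0 (euler_seq n) n.

(* {N brack j}: sum_{j=1}^N {N brack j} x^(2j-1) = x^(2N) - E_(2N)(x);
   zero for j <= 0 or j > N. *)
Definition ebrack (N j : nat) : rat :=
  if ((0 < j) && (j <= N))%N then - (eulerE N.*2)`_(j.*2.-1) else 0.

(* Main.v *)
Require Import Defs.
From mathcomp Require Import all_boot all_order all_algebra.
From mathcomp Require Import ring lra zify.
Import Order.TTheory GRing.Theory Num.Theory.
Local Open Scope ring_scope.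

Lemma size_bern n : size (bern_seq n) = n.+1.
Proof. by elim: n => //= n IH; rewrite size_rcons IH. Qed.

Lemma bern_nth n m : (m <= n)%N -> nth 0 (bern_seq n) m = bernoulli m.
Proof.
elim: n => [|n IH]; first by rewrite leqn0 => /eqP->.
rewrite leq_eqVlt => /orP[/eqP->//|Hm].
by rewrite /= nth_rcons size_bern Hm IH.
Qed.

Lemma bern_rec m : bernoulli m.+1 =
  - (m.+2%:R)^-1 * \sum_(k < m.+1) 'C(m.+2, k)%:R * bernoulli k.
Proof.
rewrite {1}/bernoulli /= nth_rcons size_bern ltnn eqxx.
congr (_ * _); apply: eq_bigr => k _; rewrite bern_nth //; exact: ltnSE (ltn_ord k).
Qed.

Lemma size_euler n : size (euler_seq n) = n.+1.
Proof. by elim: n => //= n IH; rewrite size_rcons IH. Qed.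

Lemma euler_nth n m : (m <= n)%N -> nth 0 (euler_seq n) m = eulerE m.
Proof.
elim: n => [|n IH]; first by rewrite leqn0 => /eqP->.
rewrite leq_eqVlt => /orP[/eqP->//|Hm].
by rewrite /= nth_rcons size_euler Hm IH.
Qed.

Lemma euler_rec m : eulerE m.+1 =
  'X^(m.+1) - 2^-1 *: \sum_(k < m.+1) 'C(m.+1, k)%:R *: eulerE k.
Proof.
rewrite {1}/eulerE /= nth_rcons size_euler ltnn eqxx.
congr (_ - _ *: _); apply: eq_bigr => k _; rewrite euler_nth //; exact: ltnSE (ltn_ord k).
Qed.

Lemma euler0 : eulerE 0 = 1. Proof. by []. Qed.

Definition ee (m : nat) : rat := (eulerE m)`_0.

Lemma bern_sum n : \sum_(k < n) 'C(n, k)%:R * bernoulli k = (n == 1%N)%:R.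
Proof.
case: n => [|[|m]]; first by rewrite big_ord0.
  by rewrite big_ord1 /= mul1r.
rewrite big_ord_recr /= bern_rec binSn.
have H : (m.+2%:R : rat) != 0 by rewrite pnatr_eq0.
by rewrite mulrA mulrN divff // mulN1r subrr.
Qed.

Lemma ee_sum m : \sum_(k < m) 'C(m, k)%:R * ee k = 2 * (m == 0%N)%:R - 2 * ee m.
Proof.
case: m => [|m]; first by rewrite big_ord0 /ee euler0 coefC /=; ring.
rewrite {2}/ee euler_rec coefB coefXn coefZ coef_sum /=.
rewrite mulr0 !sub0r mulrN opprK mulrA divff ?mul1r //.
by apply: eq_bigr => k _; rewrite coefZ.
Qed.

Lemma binCC a b c : (c <= b)%N -> (b <= a)%N ->
  ('C(a, b) * 'C(b, c) = 'C(a, c) * 'C(a - c, b - c))%N.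
Proof.
move=> hcb hba.
have hpos : (0 < c`! * ((b - c)`! * (a - b)`!))%N by rewrite !muln_gt0 !fact_gt0.
apply/eqP; rewrite -(eqn_pmul2r hpos); apply/eqP.
have e1 : ('C(a, b) * 'C(b, c) * (c`! * ((b - c)`! * (a - b)`!)) = a`!)%N.
  by rewrite -(bin_fact hba) -(bin_fact hcb); ring.
have e2 : ('C(a, c) * 'C(a - c, b - c) * (c`! * ((b - c)`! * (a - b)`!)) = a`!)%N.
  have hh : (b - c <= a - c)%N by lia.
  have hab : (a - c - (b - c) = a - b)%N by lia.
  rewrite -(bin_fact (leq_trans hcb hba)) -(bin_fact hh) hab; ring.
by rewrite e1 e2.
Qed.

Lemma euler_coef n p : (eulerE n)`_p = 'C(n, p)%:R * ee (n - p).
Proof.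
elim/ltn_ind: n p => -[|n] IH p.
  rewrite euler0 coefC /ee euler0 coefC /=; case: p => //=; ring.
rewrite euler_rec coefB coefXn coefZ coef_sum.
under eq_bigr => k _ do rewrite coefZ IH //.
case: (ltnP n.+1 p) => hp.
  rewrite bin_small // mul0r big1 ?mulr0 ?subr0.
    by rewrite eqn_leq leqNgt hp.
  move=> k _; rewrite (@bin_small k p) ?mul0r ?mulr0 //.
  have := ltn_ord k; lia.
rewrite -(big_mkord xpredT (fun k => 'C(n.+1, k)%:R * ('C(k, p)%:R * ee (k - p)))).
have hp' : (0 <= p)%N by [].
rewrite (@big_cat_nat _ _ _ p 0 n.+1 _ _ hp' hp) /= big1_seq ?add0r; last first.
  move=> k; rewrite mem_index_iota => /andP[_ hk]; rewrite (@bin_small k p) ?mul0r ?mulr0 //.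
set F := fun i => 'C(n.+1, i)%:R * ('C(i, p)%:R * ee (i - p)).
have -> : \sum_(p <= i < n.+1) F i = \sum_(i < n.+1 - p) F (i + p)%N.
  by rewrite -{1}[p]add0n big_addn big_mkord.
rewrite /F.
have -> : \sum_(i < n.+1 - p) F (i + p)%N =
    'C(n.+1, p)%:R * \sum_(i < n.+1 - p) 'C(n.+1 - p, i)%:R * ee i.
  rewrite mulr_sumr; apply: eq_bigr => k _; rewrite /F mulrA -natrM.
  rewrite (binCC _ _ _ (leq_addl k p)); last by have := ltn_ord k; lia.
  by rewrite addnK natrM mulrA.
rewrite ee_sum.
have -> : ((n.+1 - p)%N == 0%N) = (p == n.+1).
  apply/eqP/eqP; lia.
case: eqP => [->|_]; first by rewrite binn /=; field.
by rewrite /=; field.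
Qed.

Definition conv (a b : nat -> rat) n :=
  \sum_(k < n.+1) 'C(n, k)%:R * a k * b (n - k)%N.
Definition ps (a : nat -> rat) (N : nat) : {poly rat} :=
  \poly_(i < N.+1) (a i / (i`!)%:R).
Definition eqm N (p q : {poly rat}) := forall i, (i <= N)%N -> p`_i = q`_i.
Definition ones : nat -> rat := fun _ => 1.
Definition tw (a : nat -> rat) : nat -> rat := fun n => (-1) ^+ n * a n.

Lemma coef_ps a N i : (i <= N)%N -> (ps a N)`_i = a i / i`!%:R.
Proof. by move=> h; rewrite coef_poly ltnS h. Qed.

Lemma fact_neq0 i : (i`!%:R : rat) != 0.
Proof. by rewrite pnatr_eq0 -lt0n fact_gt0. Qed.

Lemma ps_mul a b N n : (n <= N)%N -> (ps a N * ps b N)`_n = conv a b n / n`!%:R.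
Proof.
move=> hn; rewrite coefM /conv mulr_suml; apply: eq_bigr => -[k hk] _ /=.
have hk' : (k <= n)%N by rewrite -ltnS.
rewrite !coef_ps; [|lia|lia].
rewrite -(bin_fact hk') !natrM.
have h1 : ('C(n, k)%:R : rat) != 0 by rewrite pnatr_eq0 -lt0n bin_gt0.
have h2 := fact_neq0 k; have h3 := fact_neq0 (n - k).
by field; rewrite h1 h2 h3.
Qed.

Lemma eqm_refl N p : eqm N p p. Proof. by []. Qed.
Lemma eqm_sym N p q : eqm N p q -> eqm N q p.
Proof. by move=> h i hi; rewrite h. Qed.
Lemma eqm_trans N p q r : eqm N p q -> eqm N q r -> eqm N p r.
Proof. by move=> h1 h2 i hi; rewrite h1 ?h2. Qed.
Lemma eqmD N p q p' q' : eqm N p p' -> eqm N q q' -> eqm N (p + q) (p' + q').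
Proof. by move=> h1 h2 i hi; rewrite !coefD h1 ?h2. Qed.
Lemma eqmB N p q p' q' : eqm N p p' -> eqm N q q' -> eqm N (p - q) (p' - q').
Proof. by move=> h1 h2 i hi; rewrite !coefB h1 ?h2. Qed.
Lemma eqmM N p q p' q' : eqm N p p' -> eqm N q q' -> eqm N (p * q) (p' * q').
Proof.
move=> h1 h2 i hi; rewrite !coefM; apply: eq_bigr => -[k hk] _ /=.
rewrite h1 ?h2 //; lia.
Qed.

Lemma eqm_conv a b N : eqm N (ps a N * ps b N) (ps (conv a b) N).
Proof. by move=> i hi; rewrite ps_mul // coef_ps. Qed.

Lemma uniqX N (P1 P2 Q : {poly rat}) : Q`_0 = 0 -> Q`_1 != 0 ->
  eqm N.+1 (P1 * Q) (P2 * Q) -> eqm N P1 P2.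
Proof.
move=> hQ0 hQ1 h.
have H : forall i, (i <= N.+1)%N -> ((P1 - P2) * Q)`_i = 0.
  by move=> i hi; rewrite mulrBl coefB h // subrr.
suff : forall i, (i <= N)%N -> (P1 - P2)`_i = 0.
  by move=> h' i hi; apply/eqP; rewrite -subr_eq0 -coefB h'.
elim/ltn_ind => i IH hi.
have := H i.+1; rewrite ltnS => /(_ hi).
rewrite coefM big_ord_recr big_ord_recr /= subnn hQ0 mulr0 addr0 subSnn.
rewrite big1 ?add0r; last first.
  move=> -[k hk] _ /=; rewrite IH ?mul0r //; lia.
by move/eqP; rewrite mulf_eq0 (negbTE hQ1) orbF => /eqP.
Qed.

Lemma uniq0 N (P1 P2 Q : {poly rat}) : Q`_0 != 0 ->
  eqm N (P1 * Q) (P2 * Q) -> eqm N P1 P2.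
Proof.
move=> hQ0 h.
have H : forall i, (i <= N)%N -> ((P1 - P2) * Q)`_i = 0.
  by move=> i hi; rewrite mulrBl coefB h // subrr.
suff : forall i, (i <= N)%N -> (P1 - P2)`_i = 0.
  by move=> h' i hi; apply/eqP; rewrite -subr_eq0 -coefB h'.
elim/ltn_ind => i IH hi.
have := H i hi.
rewrite coefM big_ord_recr /= subnn.
rewrite big1 ?add0r; last first.
  move=> -[k hk] _ /=; rewrite IH ?mul0r //; lia.
by move/eqP; rewrite mulf_eq0 (negbTE hQ0) orbF => /eqP.
Qed.

Lemma conv_one a n : conv a ones n = \sum_(k < n) 'C(n, k)%:R * a k + a n.
Proof.
rewrite /conv big_ord_recr /= binn mul1r /ones mulr1; congr (_ + _).
by apply: eq_bigr => k _; rewrite mulr1.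
Qed.

Lemma conv_tw a b n : conv (tw a) (tw b) n = tw (conv a b) n.
Proof.
rewrite /conv /tw mulr_sumr; apply: eq_bigr => -[k hk] _ /=.
have E : (-1) ^+ n = (-1) ^+ k * (-1) ^+ (n - k) :> rat.
  by rewrite -exprD subnKC // -ltnS.
rewrite E; ring.
Qed.
Arguments eqm_refl {N p}.
Arguments eqm_sym {N p q}.
Arguments eqm_trans {N p q r}.
Arguments eqmD {N p q p' q'}.
Arguments eqmB {N p q p' q'}.
Arguments eqmM {N p q p' q'}.

Lemma ps_one_coef N i : (i <= N)%N -> (ps ones N)`_i = (i`!%:R)^-1.
Proof. by move=> h; rewrite coef_ps // /ones mul1r. Qed.

Lemma PB N : eqm N (ps bernoulli N * (ps ones N - 1)) 'X.
Proof.
move=> i hi; rewrite mulrBr mulr1 coefB ps_mul // coef_ps // conv_one bern_sum coefX.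
rewrite -mulrBl addrK; case: eqP => [->|_]; by rewrite ?mul0r // /= invr1 mulr1.
Qed.

Lemma Pe N : eqm N (ps ee N * (ps ones N + 1)) 2%:P.
Proof.
move=> i hi; rewrite mulrDr mulr1 coefD ps_mul // coef_ps // conv_one -mulrDl.
rewrite ee_sum coefC; case: eqP => [->|_] /=; last by rewrite mulr0; ring.
rewrite invr1 mulr1 mulr1; ring.
Qed.

Definition two : nat -> rat := fun n => 2 ^+ n.

Lemma POO N : eqm N (ps ones N * ps ones N) (ps two N).
Proof.
move=> i hi; rewrite ps_mul // coef_ps //; congr (_ / _).
rewrite /conv /two -[2]/(1 + 1) exprD1n; apply: eq_bigr => k _.
by rewrite /ones expr1n !mulr1.
Qed.

Definition DD : nat -> rat := fun n => 2 ^+ n * bernoulli n.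

Lemma PD N : eqm N (ps DD N * (ps two N - 1)) (2%:P * 'X).
Proof.
move=> i hi; rewrite mulrBr mulr1 coefB ps_mul // coef_ps // coefCM coefX.
have -> : conv DD two i = 2 ^+ i * conv bernoulli ones i.
  rewrite /conv mulr_sumr; apply: eq_bigr => -[k hk] _ /=.
  rewrite /DD /two /ones.
  have E : (2 ^+ i : rat) = 2 ^+ k * 2 ^+ (i - k) by rewrite -exprD subnKC // -ltnS.
  rewrite E; ring.
rewrite conv_one bern_sum /DD.
case: eqP => [->|_]; rewrite /= ?invr1; ring.
Qed.

Lemma F1 n : conv ee bernoulli n = 2 ^+ n * bernoulli n.
Proof.
set N := n.+1.
have H : eqm n.+1 (ps (conv ee bernoulli) N * (ps two N - 1)) (ps DD N * (ps two N - 1)).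
  apply: (@eqm_trans _ _ ((ps ee N * ps bernoulli N) * (ps ones N * ps ones N - 1))).
    apply: eqmM; first exact: eqm_sym (eqm_conv _ _ _).
    by apply: eqmB; [apply: eqm_sym; apply: POO | apply: eqm_refl].
  have -> : ps ee N * ps bernoulli N * (ps ones N * ps ones N - 1) =
     (ps ee N * (ps ones N + 1)) * (ps bernoulli N * (ps ones N - 1)) by ring.
  apply: (@eqm_trans _ _ (2%:P * 'X)); first exact: eqmM (Pe _) (PB _).
  exact: eqm_sym (PD _).
have hQ0 : (ps two N - 1)`_0 = 0.
  by rewrite coefB coef_ps // coefC /two /= fact0 expr0 divr1 subrr.
have hQ1 : (ps two N - 1)`_1 != 0.
  by rewrite coefB coef_ps // coefC /two /=.
have := uniqX _ _ _ _ hQ0 hQ1 H n (leqnn n).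
rewrite !coef_ps // => /eqP; rewrite (inj_eq (mulIf _)) ?invr_eq0 ?fact_neq0 // => /eqP ->.
by []. Qed.

Lemma PtwB N : eqm N (ps (tw bernoulli) N * (ps (tw ones) N - 1)) (- 'X).
Proof.
move=> i hi; rewrite mulrBr mulr1 coefB ps_mul // coef_ps // conv_tw /tw conv_one.
rewrite bern_sum coefN coefX; case: eqP => [->|_] /=; rewrite ?invr1; ring.
Qed.

Lemma PtwO N : eqm N (ps (tw ones) N * ps ones N) 1.
Proof.
move=> i hi; rewrite ps_mul // coefC.
have -> : conv (tw ones) ones i = (-1 + 1) ^+ i.
  rewrite exprD1n /conv; apply: eq_bigr => k _.
  by rewrite /tw /ones !mulr1 mulr_natl.
rewrite addNr expr0n; case: eqP => [->|_] /=; rewrite ?mul0r // ?fact0 divr1.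
Qed.

Lemma PT N : eqm N (ps (fun n => (n == 1%N)%:R) N) 'X.
Proof.
move=> i hi; rewrite coef_ps // coefX; case: eqP => [->|_] /=; rewrite ?mul0r //.
Qed.

Lemma ps_add a b N : ps (fun n => a n + b n) N = ps a N + ps b N.
Proof.
apply/polyP => i; rewrite coefD !coef_poly; case: ifP => _; rewrite ?mulrDl ?addr0 //.
Qed.

Lemma F2 n : tw bernoulli n = bernoulli n + (n == 1%N)%:R.
Proof.
set N := n.+1.
set O := ps ones N.
have H : eqm n.+1 (ps (tw bernoulli) N * (O - 1))
   (ps (fun k => bernoulli k + (k == 1%N)%:R) N * (O - 1)).
  have -> : ps (tw bernoulli) N * (O - 1) =
    (ps (tw bernoulli) N * (ps (tw ones) N - 1)) * (- O)
    + ps (tw bernoulli) N * (ps (tw ones) N * O - 1) by ring.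
  apply: (@eqm_trans _ _ ((- 'X) * (- O) + ps (tw bernoulli) N * (1 - 1))).
    apply: eqmD; apply: eqmM; try exact: eqm_refl; first exact: PtwB.
    apply: eqmB; [exact: PtwO | exact: eqm_refl].
  rewrite subrr mulr0 addr0 mulrNN ps_add mulrDl.
  apply: (@eqm_trans _ _ ('X + 'X * (O - 1))); last first.
    apply: eqmD; [exact: eqm_sym (PB _) | exact: eqmM (eqm_sym (PT _)) eqm_refl].
  have -> : 'X + 'X * (O - 1) = 'X * O :> {poly rat} by ring.
  exact: eqm_refl.
have hQ0 : (O - 1)`_0 = 0 by rewrite coefB coef_ps // coefC /ones /=.
have hQ1 : (O - 1)`_1 != 0 by rewrite coefB coef_ps // coefC /ones /=.
have := uniqX _ _ _ _ hQ0 hQ1 H n (leqnn n).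
by rewrite !coef_ps // => /eqP; rewrite (inj_eq (mulIf _)) ?invr_eq0 ?fact_neq0 // => /eqP ->.
Qed.

Lemma PtwE N : eqm N (ps (tw ee) N * (ps (tw ones) N + 1)) 2%:P.
Proof.
move=> i hi; rewrite mulrDr mulr1 coefD ps_mul // coef_ps // conv_tw /tw conv_one.
rewrite ee_sum coefC; case: eqP => [->|_] /=; rewrite ?expr0 ?invr1; ring.
Qed.

Lemma PE2 N : eqm N (ps (fun n => 2 * (n == 0%N)%:R - ee n) N) (2%:P - ps ee N).
Proof.
move=> i hi; rewrite coefB !coef_ps // coefC; case: eqP => [->|_] /=; rewrite ?invr1; ring.
Qed.

Lemma F3 n : tw ee n = 2 * (n == 0%N)%:R - ee n.
Proof.
set N := n.
set O := ps ones N.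
have H : eqm n (ps (tw ee) N * (O + 1))
   (ps (fun n => 2 * (n == 0%N)%:R - ee n) N * (O + 1)).
  have -> : ps (tw ee) N * (O + 1) =
    (ps (tw ee) N * (ps (tw ones) N + 1)) * O
    - ps (tw ee) N * (ps (tw ones) N * O - 1) by ring.
  apply: (@eqm_trans _ _ (2%:P * O - ps (tw ee) N * (1 - 1))).
    apply: eqmB; apply: eqmM; try exact: eqm_refl; first exact: PtwE.
    apply: eqmB; [exact: PtwO | exact: eqm_refl].
  rewrite subrr mulr0 subr0.
  apply: (@eqm_trans _ _ ((2%:P - ps ee N) * (O + 1))); last first.
    apply: eqmM; [exact: eqm_sym (PE2 _) | exact: eqm_refl].
  have -> : (2%:P - ps ee N) * (O + 1) = 2%:P * (O + 1) - ps ee N * (O + 1) by ring.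
  apply: (@eqm_trans _ _ (2%:P * (O + 1) - 2%:P)); last first.
    apply: eqmB; [exact: eqm_refl | exact: eqm_sym (Pe _)].
  have -> : 2%:P * (O + 1) - 2%:P = 2%:P * O :> {poly rat} by ring.
  exact: eqm_refl.
have hQ0 : (O + 1)`_0 != 0 by rewrite coefD coef_ps // coefC /ones /=.
have := uniq0 _ _ _ _ hQ0 H n (leqnn n).
by rewrite !coef_ps // => /eqP; rewrite (inj_eq (mulIf _)) ?invr_eq0 ?fact_neq0 // => /eqP ->.
Qed.

Lemma B_odd_gen r : - bernoulli r.*2.+1 = bernoulli r.*2.+1 + (r == 0%N)%:R.
Proof.
have := F2 r.*2.+1; rewrite /tw -signr_odd /= odd_double /= expr1 mulN1r => ->.
by congr (_ + _%:R); case: r.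
Qed.

Lemma B_odd r : (0 < r)%N -> bernoulli r.*2.+1 = 0.
Proof.
move=> hr; have := B_odd_gen r; rewrite (negbTE (lt0n_neq0 hr)) addr0.
move/eqP; rewrite -subr_eq0 -opprD oppr_eq0 -mulr2n mulrn_eq0 /= => /eqP //.
Qed.

Lemma B1 : bernoulli 1 = - 2^-1.
Proof. have := B_odd_gen 0; rewrite /= => h; lra. Qed.

Lemma e_even q : (0 < q)%N -> ee q.*2 = 0.
Proof.
move=> hq; have := F3 q.*2; rewrite /tw -signr_odd odd_double expr0 mul1r.
rewrite double_eq0 (negbTE (lt0n_neq0 hq)) mulr0 sub0r => h; lra.
Qed.

Lemma ee0 : ee 0 = 1. Proof. by rewrite /ee euler0 coefC. Qed.

Lemma sum_split (F : nat -> rat) m :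
  \sum_(k < m.*2) F k = \sum_(q < m) (F q.*2 + F q.*2.+1).
Proof.
elim: m => [|m IH]; first by rewrite !big_ord0.
by rewrite doubleS !big_ord_recr /= IH addrA.
Qed.

Lemma odd_sum r :
  \sum_(q < r.+1) 'C(r.*2.+1, q.*2.+1)%:R * ee q.*2.+1 * bernoulli (r.*2.+1 - q.*2.+1)
  = - 2^-1 * (r == 0%N)%:R.
Proof.
have := F1 r.*2.+1; rewrite /conv.
rewrite -[(r.*2.+2)]/((r.+1).*2) (sum_split (fun k => 'C(r.*2.+1, k)%:R * ee k * bernoulli (r.*2.+1 - k))) big_split /=.
rewrite big_ord_recl /= bin0 ee0 subn0 mul1r big1 ?addr0; last first.
  by move=> q _; rewrite e_even // mulr0 mul0r.
move=> h.
have -> : \sum_(q < r.+1) 'C(r.*2.+1, q.*2.+1)%:R * ee q.*2.+1 * bernoulli (r.*2.+1 - q.*2.+1)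
   = (2 ^+ r.*2.+1 - 1) * bernoulli r.*2.+1 by rewrite mulrBl mul1r -h; ring.
case: r h => [|r] h; first by rewrite B1 /=; lra.
by rewrite B_odd // mulr0 /= mulr0.
Qed.

Theorem lemma5p2 (n j : nat) : (j <= n)%N ->
  \sum_(j <= i < n.+1) 'C(n.*2, i.*2)%:R * bernoulli (n.*2 - i.*2) * ebrack i j
  = (if (j < n)%N then 0 else n%:R).
Proof.
case: j => [|j] hj.
  rewrite big1_seq; last by move=> i _; rewrite /ebrack /= mulr0.
  by case: n hj.
set r := (n - j.+1)%N.
have hn : n = (j.+1 + r)%N by rewrite /r; lia.
rewrite -{1}[j.+1]add0n big_addn big_mkord.
have -> : (n.+1 - j.+1 = r.+1)%N by rewrite /r; lia.
have -> : \sum_(i < r.+1) 'C(n.*2, (i + j.+1).*2)%:R * bernoulli (n.*2 - (i + j.+1).*2)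
     * ebrack (i + j.+1) j.+1 =
  - 'C(n.*2, j.*2.+1)%:R * \sum_(q < r.+1) 'C(r.*2.+1, q.*2.+1)%:R * ee q.*2.+1
     * bernoulli (r.*2.+1 - q.*2.+1).
  rewrite mulr_sumr; apply: eq_bigr => -[q hq] _ /=.
  rewrite /ebrack.
  have -> : (0 < j.+1 <= q + j.+1)%N by apply/andP; split; lia.
  rewrite euler_coef.
  have -> : ((j.+1).*2.-1 = j.*2.+1)%N by lia.
  have -> : ((q + j.+1).*2 - j.*2.+1 = q.*2.+1)%N by lia.
  have -> : (n.*2 - (q + j.+1).*2 = r.*2.+1 - q.*2.+1)%N by rewrite hn; lia.
  have hb := binCC (n.*2) ((q + j.+1).*2) (j.*2.+1).
  have E : ('C(n.*2, (q + j.+1).*2) * 'C((q + j.+1).*2, j.*2.+1)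
      = 'C(n.*2, j.*2.+1) * 'C(r.*2.+1, q.*2.+1))%N.
    rewrite hb; [|lia|rewrite hn; lia].
    congr (_ * 'C(_, _))%N; lia.
  have E' : ('C(n.*2, (q + j.+1).*2)%:R * 'C((q + j.+1).*2, j.*2.+1)%:R : rat)
     = 'C(n.*2, j.*2.+1)%:R * 'C(r.*2.+1, q.*2.+1)%:R by rewrite -!natrM E.
  set X := bernoulli _; set Y := ee _.
  transitivity (- ('C(n.*2, (q + j.+1).*2)%:R * 'C((q + j.+1).*2, j.*2.+1)%:R) * Y * X).
    ring.
  rewrite E'; ring.
rewrite odd_sum.
case: eqP => hr.
  have -> : (j.+1 < n)%N = false by apply/negbTE; rewrite -leqNgt; lia.
  have -> : (j.*2.+1 = n.*2 - 1)%N by lia.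
  rewrite bin_sub; last by lia.
  by rewrite bin1 -muln2 natrM /=; field.
have -> : (j.+1 < n)%N by lia.
by rewrite /= !mulr0.
Qed.
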